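(* For any $\mu\in\mathbb F^\times$, the elements $\prod_{i=0}^{d'-1}(A-\mu q^{2i}-\mu^{-1}q^{-2i})$, $\prod_{i=0}^{d'-1}(B-\mu q^{2i}-\mu^{-1}q^{-2i})$ and $\prod_{i=0}^{d'-1}(C-\mu q^{2i}-\mu^{-1}q^{-2i})$ are central in $\triangle_q$.
   Context: $\mathbb F$ is an algebraically closed field and $q\in\mathbb F^\times$ a root of unity of order $d\notin\{1,2,4\}$; $d'=d$ if $d$ odd, $d'=d/2$ if $d$ even. $\triangle_q$ is the unital associative $\mathbb F$-algebra with generators $A,B,C$ subject to the relations that each of $A+\frac{qBC-q^{-1}CB}{q^2-q^{-2}}$, $B+\frac{qCA-q^{-1}AC}{q^2-q^{-2}}$, $C+\frac{qAB-q^{-1}BA}{q^2-q^{-2}}$ is central. *)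

(* Defs.v *)
From HB Require Import structures.
From mathcomp Require Import all_boot all_order all_algebra all_field.
Set Implicit Arguments. Unset Strict Implicit. Unset Printing Implicit Defensive.
Import GRing.Theory.
Local Open Scope ring_scope.

Inductive gen3 (F : fieldType) (R : lalgType F) (a b c : R) : R -> Prop :=
  | gen3_scal (k : F) : gen3 a b c (k%:A)
  | gen3_a : gen3 a b c a
  | gen3_b : gen3 a b c b
  | gen3_c : gen3 a b c c
  | gen3_add x y : gen3 a b c x -> gen3 a b c y -> gen3 a b c (x + y)
  | gen3_mul x y : gen3 a b c x -> gen3 a b c y -> gen3 a b c (x * y).

Definition central3 (F : fieldType) (R : lalgType F) (a b c z : R) : Prop :=
  forall x, gen3 a b c x -> z * x = x * z.

Definition aw_expr (F : fieldType) (R : lalgType F) (q : F) (x y z : R) : R :=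
  x + (q ^+ 2 - q ^- 2)^-1 *: (q *: (y * z) - q^-1 *: (z * y)).

(* (a, b, c) satisfy the defining relations of the universal Askey-Wilson
   algebra: each of the three expressions is central (in the algebra
   generated by a, b, c). *)
Definition AW_relations (F : fieldType) (R : lalgType F) (q : F) (a b c : R) : Prop :=
  [/\ central3 a b c (aw_expr q a b c),
      central3 a b c (aw_expr q b c a)
    & central3 a b c (aw_expr q c a b)].

Definition dprime (d : nat) : nat := if odd d then d else d./2.

Definition cprod (F : fieldType) (R : lalgType F) (d : nat) (q mu : F) (x : R) : R :=
  \prod_(i < dprime d) (x - (mu * q ^+ (2 * i) + mu^-1 * q ^- (2 * i))%:A).

(* Main.v *)
Require Import Defs.
From HB Require Import structures.
From mathcomp Require Import all_boot all_order all_algebra all_field.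
From mathcomp Require Import ring.
Set Implicit Arguments. Unset Strict Implicit. Unset Printing Implicit Defensive.
Import GRing.Theory.
Local Open Scope ring_scope.
Section Ev.
Variables (F : fieldType) (R : algType F) (A : R).
Implicit Types (P Q : {poly {poly F}}) (p : {poly F}) (u v w : R) (k : F).

Definition ha (p : {poly F}) : R := horner_alg A p.
Definition ev (P : {poly {poly F}}) (v : R) : R :=
  \sum_(i < size P) ha P`_i * v * A ^+ i.

Lemma ha0 : ha 0 = 0. Proof. by rewrite /ha rmorph0. Qed.

Lemma ev_bound n P v : (size P <= n)%N ->
  ev P v = \sum_(i < n) ha P`_i * v * A ^+ i.
Proof.
move=> hn; rewrite /ev (big_ord_widen n (fun i => ha P`_i * v * A ^+ i) hn).
rewrite big_mkcond; apply: eq_bigr => i _; case: ifP => // /negbT.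
by rewrite -leqNgt => hi; rewrite nth_default // ha0 !mul0r.
Qed.

Lemma evD P Q v : ev (P + Q) v = ev P v + ev Q v.
Proof.
set n := maxn (size P) (size Q).
rewrite (@ev_bound n P) ?leq_maxl // (@ev_bound n Q) ?leq_maxr //.
rewrite (@ev_bound n) ?(leq_trans (size_polyD _ _)) //.
rewrite -big_split; apply: eq_bigr => i _ /=.
by rewrite coefD /ha rmorphD !mulrDl.
Qed.

Lemma evN P v : ev (- P) v = - ev P v.
Proof.
rewrite /ev size_polyN -sumrN; apply: eq_bigr => i _.
by rewrite coefN /ha rmorphN !mulNr.
Qed.

Lemma evB P Q v : ev (P - Q) v = ev P v - ev Q v.
Proof. by rewrite evD evN. Qed.

Lemma ev0 v : ev 0 v = 0.
Proof. by rewrite /ev size_poly0 big_ord0. Qed.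

Lemma evC p v : ev p%:P v = ha p * v.
Proof.
rewrite (@ev_bound 1) ?size_polyC ?leq_b1 // big_ord1 coefC /= expr0 mulr1.
by [].
Qed.

Lemma ev_mulX P v : ev (P * 'X) v = ev P v * A.
Proof.
rewrite (@ev_bound (size P).+1); last first.
  by rewrite (leq_trans (size_polyMleq _ _)) // size_polyX addn2.
rewrite big_ord_recl coefMX eqxx ha0 !mul0r add0r /ev mulr_suml.
apply: eq_bigr => i _; rewrite coefMX /= exprSr !mulrA.
by [].
Qed.

Lemma ev_mulC p P v : ev (p%:P * P) v = ha p * ev P v.
Proof.
rewrite (@ev_bound (size P)); last first.
  apply: leq_trans (size_polyMleq _ _) _; rewrite size_polyC.
  by case: (p != 0); rewrite ?add0n ?add1n ?leq_pred.
rewrite /ev mulr_sumr; apply: eq_bigr => i _.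
by rewrite coefCM /ha rmorphM !mulrA.
Qed.

Lemma ev1 v : ev 1 v = v.
Proof. by rewrite -polyC1 evC /ha rmorph1 mul1r. Qed.

Lemma ev_mul P Q v : ev (P * Q) v = ev P (ev Q v).
Proof.
elim/poly_ind: P => [|P c IH]; first by rewrite mul0r !ev0.
rewrite mulrDl evD evD -mulrA [_ * Q]mulrC mulrA ev_mulX IH ev_mulC.
by rewrite ev_mulX evC.
Qed.

Lemma evvD P u w : ev P (u + w) = ev P u + ev P w.
Proof. by rewrite /ev -big_split; apply: eq_bigr => i _; rewrite mulrDr mulrDl. Qed.

Lemma evvZ P k u : ev P (k *: u) = k *: ev P u.
Proof.
rewrite /ev scaler_sumr; apply: eq_bigr => i _.
by rewrite -scalerAr -scalerAl.
Qed.

Lemma evvN P u : ev P (- u) = - ev P u.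
Proof. by rewrite -scaleN1r evvZ scaleN1r. Qed.

Lemma evvB P u w : ev P (u - w) = ev P u - ev P w.
Proof. by rewrite evvD evvN. Qed.

Lemma ha_comm p : ha p * A = A * ha p.
Proof.
have -> : A = ha 'X by rewrite /ha horner_algX.
by rewrite -!rmorphM mulrC.
Qed.

Lemma ev_comm P w : A * w = w * A -> ev P w = ha (P.['X]) * w.
Proof.
move=> hw; rewrite horner_coef /ha rmorph_sum mulr_suml /ev.
apply: eq_bigr => i _; rewrite rmorphM rmorphXn /= horner_algX.
have hc : GRing.comm w (A ^+ i) by apply: commrX.
by rewrite -!mulrA hc.
Qed.

End Ev.

Section Cong.
Variables (K : comRingType) (e : K).
Definition cg (u v : K) := exists g, u - v = e * g.

Lemma cg_mul u1 v1 u2 v2 : cg u1 v1 -> cg u2 v2 -> cg (u1 * u2) (v1 * v2).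
Proof.
move=> [g1 h1] [g2 h2]; exists (u1 * g2 + g1 * v2).
have -> : u1 * u2 - v1 * v2 = u1 * (u2 - v2) + (u1 - v1) * v2 by ring.
by rewrite h1 h2; ring.
Qed.

Lemma cg_prod n (F1 F2 : 'I_n -> K) : (forall i, cg (F1 i) (F2 i)) ->
  cg (\prod_(i < n) F1 i) (\prod_(i < n) F2 i).
Proof.
move=> h; apply: (big_ind2 cg) => //; last by move=> *; apply: cg_mul.
by exists 0; rewrite subrr mulr0.
Qed.

Lemma cg_key n (al ai : 'I_n -> K) (Z W : K) :
  (forall i, al i * ai i = 1) -> Z * W - 1 = e ->
  cg (\prod_(i < n) (Z + W - (al i + ai i)))
     ((\prod_(i < n) - ai i) * (\prod_(i < n) (Z - al i)) * \prod_(i < n) (W - al i)).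
Proof.
move=> hal he; rewrite -!big_split /=; apply: cg_prod => i.
exists (ai i); rewrite -he; apply/eqP; rewrite -subr_eq0.
have -> : Z + W - (al i + ai i) - - ai i * (Z - al i) * (W - al i) -
   (Z * W - 1) * ai i = (1 - al i * ai i) * (Z + W - al i) by ring.
by rewrite hal subrr mul0r.
Qed.
End Cong.

Section PolyPart.
Variable F : fieldType.
Definition cK : F -> {poly {poly F}} := (@polyC {poly F}) \o (@polyC F).
HB.instance Definition _ := GRing.RMorphism.copy cK ((@polyC {poly F}) \o (@polyC F)).

Local Notation K := {poly {poly F}}.

Lemma cK_inv (a : F) : a != 0 -> cK a * cK a^-1 = 1.
Proof. by move=> ha; rewrite -rmorphM mulfV // rmorph1. Qed.

Lemma prod_rootK n (z mu : F) (Z : K) : n.-primitive_root z -> mu != 0 ->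
  \prod_(i < n) (Z - cK (mu * z ^+ i)) = Z ^+ n - cK (mu ^+ n).
Proof.
move=> hz hmu.
have h := factor_Xn_sub_1 hz; rewrite big_mkord in h.
have := congr1 (fun p => (map_poly cK p).[Z * cK mu^-1]) h.
rewrite rmorph_prod horner_prod /= rmorphB rmorphXn /= map_polyX rmorph1.
rewrite hornerD hornerN hornerXn hornerC.
under eq_bigr do rewrite rmorphB /= map_polyX map_polyC hornerD hornerN hornerX hornerC.
move=> h2.
have hm := cK_inv hmu.
transitivity (\prod_(i < n) (cK mu * (Z * cK mu^-1 - cK (z ^+ i)))).
  apply: eq_bigr => i _; rewrite rmorphM /=; apply/eqP; rewrite -subr_eq0.
  have -> : Z - cK mu * cK (z ^+ i) - cK mu * (Z * cK mu^-1 - cK (z ^+ i)) =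
    Z * (1 - cK mu * cK mu^-1) by ring.
  by rewrite hm subrr mulr0.
rewrite big_split /= h2 prodr_const card_ord rmorphXn /= exprMn mulrBr mulr1.
by rewrite mulrCA -exprMn hm expr1n mulr1.
Qed.

Variables (q mu : F) (n : nat).
Hypotheses (hq0 : q != 0) (hmu : mu != 0) (hk : q ^+ 2 - q ^- 2 != 0)
  (hz : n.-primitive_root (q ^+ 2)).

Definition kap := (q ^+ 2 - q ^- 2)^-1.
Definition xx : K := ('X : {poly F})%:P.
Definition yy : K := 'X.
Definition TT : K := cK kap * (yy - cK (q ^- 2) * xx).
Definition SS : K := cK kap * (cK (q ^+ 2) * xx - yy).
Definition Ppoly : {poly F} :=
  \prod_(i < n) ('X - (mu * q ^+ (2 * i) + mu^-1 * q ^- (2 * i))%:P).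

Lemma kap_rel : cK kap * (cK (q ^+ 2) - cK (q ^- 2)) = 1.
Proof. by rewrite -rmorphB -rmorphM mulVf // rmorph1. Qed.

Lemma TS_x : TT + SS = xx.
Proof.
rewrite /TT /SS; apply/eqP; rewrite -subr_eq0.
have -> : cK kap * (yy - cK (q ^- 2) * xx) + cK kap * (cK (q ^+ 2) * xx - yy) - xx
  = (cK kap * (cK (q ^+ 2) - cK (q ^- 2)) - 1) * xx by ring.
by rewrite kap_rel subrr mul0r.
Qed.

Lemma TS_y : cK (q ^+ 2) * TT + cK (q ^- 2) * SS = yy.
Proof.
rewrite /TT /SS; apply/eqP; rewrite -subr_eq0.
have -> : cK (q ^+ 2) * (cK kap * (yy - cK (q ^- 2) * xx)) +
   cK (q ^- 2) * (cK kap * (cK (q ^+ 2) * xx - yy)) - yy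
  = (cK kap * (cK (q ^+ 2) - cK (q ^- 2)) - 1) * yy by ring.
by rewrite kap_rel subrr mul0r.
Qed.

Lemma q2_inv : cK (q ^+ 2) * cK (q ^- 2) = 1.
Proof. by apply: cK_inv; rewrite expf_neq0. Qed.

Lemma main_poly : exists g : K,
  (Ppoly)%:P - map_poly polyC Ppoly = (TT * SS - 1) * g.
Proof.
set e := TT * SS - 1.
pose al (i : 'I_n) := cK (mu * (q ^+ 2) ^+ i).
pose ai (i : 'I_n) := cK ((mu * (q ^+ 2) ^+ i)^-1).
have hal : forall i, al i * ai i = 1.
  by move=> i; apply: cK_inv; rewrite mulf_neq0 // !expf_neq0.
have hth : forall i : 'I_n, cK (mu * q ^+ (2 * i) + mu^-1 * q ^- (2 * i)) = al i + ai i.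
  by move=> i; rewrite rmorphD /al /ai exprM invfM -exprM.
have hx : Ppoly%:P = \prod_(i < n) (TT + SS - (al i + ai i)).
  rewrite rmorph_prod; apply: eq_bigr => i _.
  by rewrite rmorphB /= -hth TS_x.
have hy : map_poly polyC Ppoly =
   \prod_(i < n) (cK (q ^+ 2) * TT + cK (q ^- 2) * SS - (al i + ai i)).
  rewrite rmorph_prod; apply: eq_bigr => i _.
  by rewrite rmorphB /= map_polyX map_polyC -hth TS_y.
have he2 : cK (q ^+ 2) * TT * (cK (q ^- 2) * SS) - 1 = e.
  rewrite /e; apply/eqP; rewrite -subr_eq0.
  have -> : cK (q ^+ 2) * TT * (cK (q ^- 2) * SS) - 1 - (TT * SS - 1) =
    (cK (q ^+ 2) * cK (q ^- 2) - 1) * (TT * SS) by ring.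
  by rewrite q2_inv subrr mul0r.
have [g1 h1] := cg_key hal (erefl e).
have [g2 h2] := cg_key hal he2.
have hpr : forall Z, \prod_(i < n) (Z - al i) = Z ^+ n - cK (mu ^+ n).
  by move=> Z; apply: prod_rootK.
have hq2n : (q ^+ 2) ^+ n = 1 by apply: prim_expr_order.
have hZ : (cK (q ^+ 2) * TT) ^+ n = TT ^+ n.
  by rewrite exprMn -rmorphXn /= hq2n rmorph1 mul1r.
have hW : (cK (q ^- 2) * SS) ^+ n = SS ^+ n.
  by rewrite exprMn -rmorphXn /= exprVn hq2n invr1 rmorph1 mul1r.
rewrite !hpr hZ hW in h2; rewrite !hpr in h1.
exists (g1 - g2); rewrite hx hy mulrBr -h1 -h2; ring.
Qed.

End PolyPart.

Section Alg.
Variables (F : fieldType) (R : algType F) (A : R).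
Implicit Types (P : {poly {poly F}}) (p : {poly F}) (v : R) (k : F).

Lemma evcK k P v : ev A (cK k * P) v = k *: ev A P v.
Proof. by rewrite /cK /= ev_mulC /ha horner_algC mulr_algl. Qed.

Lemma evx v : ev A (xx F) v = A * v.
Proof. by rewrite /xx evC /ha horner_algX. Qed.

Lemma evy v : ev A (yy F) v = v * A.
Proof. by rewrite /yy -[X in ev _ X]mul1r ev_mulX ev1. Qed.

Lemma ev_mapC p v : ev A (map_poly polyC p) v = v * ha A p.
Proof.
elim/poly_ind: p => [|p c IH]; first by rewrite rmorph0 ev0 /ha rmorph0 mulr0.
rewrite rmorphD rmorphM /= map_polyX map_polyC evD ev_mulX IH evC.
rewrite /ha rmorphD rmorphM /= horner_algX horner_algC mulr_algl.
by rewrite mulrDr mulrA mulr_algr.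
Qed.
End Alg.

Lemma gen3_prod (F : fieldType) (R : lalgType F) (a b c : R) n (th : 'I_n -> F) :
  gen3 a b c (\prod_(i < n) (a - (th i)%:A)).
Proof.
apply: (big_ind (gen3 a b c)).
- by rewrite -(scale1r 1); apply: gen3_scal.
- by move=> x y; apply: gen3_mul.
- by move=> i _; rewrite -scaleNr; apply: gen3_add; [apply: gen3_a | apply: gen3_scal].
Qed.

Lemma gen3_rot (F : fieldType) (R : lalgType F) (a b c x : R) :
  gen3 a b c x -> gen3 b c a x.
Proof.
elim=> [k||||y z _ hy _ hz|y z _ hy _ hz].
- exact: gen3_scal.
- exact: gen3_c.
- exact: gen3_a.
- exact: gen3_b.
- exact: gen3_add.
- exact: gen3_mul.
Qed.

Lemma central3_rot (F : fieldType) (R : lalgType F) (a b c z : R) :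
  central3 a b c z -> central3 b c a z.
Proof. by move=> h x hx; apply: h; apply: gen3_rot; apply: gen3_rot. Qed.

Lemma AW_rot (F : fieldType) (R : lalgType F) (q : F) (a b c : R) :
  AW_relations q a b c -> AW_relations q b c a.
Proof. by case=> h1 h2 h3; split; apply: central3_rot. Qed.

Lemma central_of (F : fieldType) (R : algType F) (a b c z : R) :
  z * a = a * z -> z * b = b * z -> z * c = c * z -> central3 a b c z.
Proof.
move=> ha hb hc x; elim=> [k||||y w _ hy _ hw|y w _ hy _ hw] //.
- by rewrite mulr_algr mulr_algl.
- by rewrite mulrDr mulrDl hy hw.
- by rewrite mulrA hy -mulrA hw mulrA.
Qed.

Section Main.
Variables (F : fieldType) (q mu : F) (n : nat).
Hypotheses (hq0 : q != 0) (hmu : mu != 0) (hk : q ^+ 2 - q ^- 2 != 0)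
  (hz : n.-primitive_root (q ^+ 2)).
Variables (R : algType F) (A B C : R).
Hypothesis hrel : AW_relations q A B C.

Lemma hq4 : (q * q) ^+ 2 - 1 != 0.
Proof.
have -> : (q * q) ^+ 2 - 1 = q ^+ 2 * (q ^+ 2 - q ^- 2).
  by rewrite mulrBr mulfV ?expf_neq0 // exprMn.
by rewrite mulf_neq0 ?expf_neq0.
Qed.

Let gam := aw_expr q C A B.
Let bet := aw_expr q B C A.

Lemma gamA : A * gam = gam * A.
Proof. by case: hrel => _ _ h; rewrite (h A (gen3_a _ _ _)). Qed.
Lemma betA : A * bet = bet * A.
Proof. by case: hrel => _ h _; rewrite (h A (gen3_a _ _ _)). Qed.

Lemma hS : ev A (SS q) B = q *: (gam - C).
Proof.
rewrite /SS evcK evB evcK evx evy /gam /aw_expr [C + _]addrC addrK.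
rewrite !scalerBr !scalerA; congr (_ *: _ - _ *: _); rewrite /kap; field.
all: by rewrite hq0 hq4.
Qed.

Lemma hT : q *: ev A (TT q) C = bet - B.
Proof.
rewrite /TT evcK evB evcK evx evy /bet /aw_expr [B + _]addrC addrK.
rewrite !scalerBr !scalerA; congr (_ *: _ - _ *: _); rewrite /kap; field.
all: by rewrite hq0 hq4.
Qed.

Lemma hWform : ev A (TT q * SS q - 1) B =
  q *: (ha A ((TT q).['X]) * gam) - bet.
Proof.
rewrite evB ev1 ev_mul hS evvZ evvB scalerBr hT (ev_comm _ gamA).
by rewrite opprB addrA addrAC addrK.
Qed.

Lemma W_comm : A * ev A (TT q * SS q - 1) B = ev A (TT q * SS q - 1) B * A.
Proof.
rewrite hWform mulrBr mulrBl betA -scalerAr -scalerAl; congr (_ *: _ - _).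
by rewrite mulrA -ha_comm -!mulrA gamA.
Qed.


Lemma zB : ha A (Ppoly q mu n) * B = B * ha A (Ppoly q mu n).
Proof.
have [g hg] := main_poly hq0 hmu hk hz.
set P := Ppoly q mu n in hg *.
apply/eqP; rewrite -subr_eq0.
have -> : ha A P * B - B * ha A P = ev A (P%:P - map_poly polyC P) B.
  by rewrite evB evC ev_mapC.
rewrite hg mulrC ev_mul (ev_comm _ W_comm).
suff -> : g.['X] = 0 by rewrite /ha rmorph0 mul0r.
have := congr1 (fun P => P.['X]) hg; rewrite /= hornerD hornerN hornerC.
have -> : (map_poly polyC P).['X] = P := comp_polyXr P.
rewrite subrr hornerM => /esym/eqP; rewrite mulf_eq0 => /orP[|/eqP //].
move/eqP/(congr1 (fun p => p.[0])).
rewrite /TT /SS /xx /yy /cK /= !hornerE /= oppr0 !mulr0 ?mul0r sub0r.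
by move/eqP; rewrite oppr_eq0 oner_eq0.
Qed.

Lemma prod_ha : \prod_(i < n) (A - (mu * q ^+ (2 * i) + mu^-1 * q ^- (2 * i))%:A)
  = ha A (Ppoly q mu n).
Proof.
rewrite /ha /Ppoly rmorph_prod; apply: eq_bigr => i _.
by rewrite rmorphB /= horner_algX horner_algC.
Qed.

Lemma main_central : central3 A B C
  (\prod_(i < n) (A - (mu * q ^+ (2 * i) + mu^-1 * q ^- (2 * i))%:A)).
Proof.
rewrite prod_ha; set z := ha A _.
have zA : z * A = A * z by rewrite ha_comm.
have zB' : z * B = B * z by apply: zB.
have zg : gen3 A B C z by rewrite /z -prod_ha; apply: gen3_prod.
have zgam : z * gam = gam * z.
  by case: hrel => _ _ h; rewrite (h z zg).
have hAB : z * (A * B) = (A * B) * z by rewrite mulrA zA -mulrA zB' mulrA.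
have hBA : z * (B * A) = (B * A) * z by rewrite mulrA zB' -mulrA zA mulrA.
have hC : C = gam - (q ^+ 2 - q ^- 2)^-1 *: (q *: (A * B) - q^-1 *: (B * A)).
  by rewrite /gam /aw_expr addrK.
apply: central_of => //.
rewrite hC mulrBr mulrBl -scalerAr -scalerAl mulrBr mulrBl -!scalerAr -!scalerAl.
by rewrite hAB hBA zgam.
Qed.

End Main.

Unset Implicit Arguments.

Theorem lemma6p5 (F : closedFieldType) (q : F) (d : nat)
  (hq : d.-primitive_root q) (hd1 : d <> 1%N) (hd2 : d <> 2%N) (hd4 : d <> 4%N)
  (R : algType F) (A B C : R) (hrel : AW_relations q A B C)
  (mu : F) (hmu : mu != 0) :
  [/\ central3 A B C (cprod d q mu A),
      central3 A B C (cprod d q mu B)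
    & central3 A B C (cprod d q mu C)].
Proof.
have hd0 : (0 < d)%N := prim_order_gt0 hq.
have hq0 : q != 0.
  apply/eqP => h0; have := prim_expr_order hq.
  rewrite h0 expr0n gtn_eqF //= => /eqP; rewrite eq_sym oner_eq0.
  by [].
have hq4 : q ^+ 4 != 1.
  rewrite -(prim_order_dvd hq); apply/negP => h.
  have hle := dvdn_leq (isT : (0 < 4)%N) h.
  by move: hd0 hle h hd1 hd2 hd4; case: (d) => [|[|[|[|[|d']]]]].
have hk : q ^+ 2 - q ^- 2 != 0.
  apply: contra hq4 => /eqP h; have e := subr0_eq h.
  rewrite (_ : 4 = 2 + 2)%N // exprD {1}e mulVf ?expf_neq0 //.
have hz : (dprime d).-primitive_root (q ^+ 2).
  have := exp_prim_root hq 2; rewrite /dprime; case: ifP => hodd.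
    have : coprime 2 d by rewrite coprime2n.
    by rewrite /coprime => /eqP ->; rewrite divn1.
  have -> : gcdn 2 d = 2 by apply/gcdn_idPl; rewrite dvdn2 hodd.
  by rewrite divn2.
split.
- exact: (main_central hq0 hmu hk hz hrel).
- apply: central3_rot; apply: central3_rot.
  exact: (main_central hq0 hmu hk hz (AW_rot hrel)).
- apply: central3_rot.
  exact: (main_central hq0 hmu hk hz (AW_rot (AW_rot hrel))).
Qed.
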